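(* In a network satisfying (H1) and (H2), if $X$ is a non-intermediate species, then for no $\ell\ge1$ does $x^{(\ell)}$ contain a monomial of the form $z^m$ with $m\ge2$ and $Z$ a non-intermediate species.
   Context: Species are capital letters, concentrations lower-case letters. Mass-action system: $\dot{\mathbf{x}}=\sum_{y\to y'}k_{yy'}\mathbf{x}^y(y'-y)$, rates $k_{yy'}>0$ (vector $\mathbf{k}$). Total derivative: $\dot\varphi=\sum_i\frac{\partial\varphi}{\partial x_i}\dot x_i$ with $\dot x_i$ replaced by the right-hand side; $\varphi^{(\ell)}$ its $\ell$-th iterate; a monomial appears in $\varphi^{(\ell)}$ if its coefficient (a polynomial in $\mathbf{k}$) is nonzero. (H1) Every connected component has the form $Y+S_0\rightleftarrows U_1\to Y+S_1\rightleftarrows\cdots\rightleftarrows U_L\to Y+S_L$ (reactions $Y+S_{j-1}\to U_j$, $U_j\to Y+S_{j-1}$, $U_j\to Y+S_j$), unique enzyme $Y$; intermediates distinct throughout the network; non-intermediates of a component pairwise distinct but may appear in other components; each complex in a unique component. $\mathscr{S}_U$ = substrates/products of the component of intermediate $U$. (H2) A partition $\mathscr{S}^{(0)}\sqcup\cdots\sqcup\mathscr{S}^{(M)}$ ($M\ge2$, nonempty, $\mathscr{S}^{(0)}$ the intermediates) with: for each intermediate $U$ with enzyme $Y$, some $\alpha\ge1$ has $\mathscr{S}_U\subseteq\mathscr{S}^{(\alpha)}$, $Y\notin\mathscr{S}^{(\alpha)}$. *)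

(* Defs.v *)
From HB Require Import structures.
From mathcomp Require Import all_boot all_order all_algebra.
Set Implicit Arguments. Unset Strict Implicit. Unset Printing Implicit Defensive.
Import GRing.Theory Num.Theory.

(* ---------- Formal polynomials in x (species) with coefficients in Z[k] ----------
   A polynomial is a formal sum (list) of terms  c * k^a * x^b  with
   c : int, a : exponent vector over the reactions, b : exponent vector over
   the species.  The coefficient of the x-monomial x^b is the polynomial in k
   whose k^a-coefficient is [coef p a b]; it is nonzero iff some [coef p a b]
   is nonzero.  This is independent of the list representation. *)

Section Poly.
Variables (S Rx : finType).

Definition xmon := {ffun S -> nat}.
Definition kmon := {ffun Rx -> nat}.
Definition term := (int * kmon * xmon)%type.
Definition fpoly := seq term.

Definition coef (p : fpoly) (a : kmon) (b : xmon) : int :=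
  (\sum_(t <- p | (t.1.2 == a) && (t.2 == b)) t.1.1)%R.

Definition appears (p : fpoly) (b : xmon) : Prop := exists a : kmon, coef p a b != 0%R.

Definition pderiv (i : S) (p : fpoly) : fpoly :=
  [seq ((t.1.1 * (t.2 i)%:Z)%R, t.1.2, [ffun s => t.2 s - nat_of_bool (s == i)]) | t : term <- p].

Definition pmul (p q : fpoly) : fpoly :=
  [seq ((t.1.1 * u.1.1)%R, [ffun r => t.1.2 r + u.1.2 r], [ffun s => t.2 s + u.2 s])
  | t : term <- p, u : term <- q].

(* mass-action right-hand side for species i:
   sum over reactions r : src r -> tgt r of k_r x^(src r) (tgt r i - src r i) *)
Definition rhs (src tgt : Rx -> xmon) (i : S) : fpoly :=
  [seq (((tgt r i)%:Z - (src r i)%:Z)%R, [ffun r' => nat_of_bool (r' == r)], src r)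
  | r <- enum Rx].

Definition tder (src tgt : Rx -> xmon) (p : fpoly) : fpoly :=
  flatten [seq pmul (pderiv i p) (rhs src tgt i) | i <- enum S].

Definition xvar (X : S) : fpoly := [:: (1%R, [ffun => 0], [ffun s => nat_of_bool (s == X)])].

Definition zpow (Z : S) (m : nat) : xmon := [ffun s => if s == Z then m else 0].

End Poly.

Section Network.
Variables (S Rx C : finType).
Definition cplx1 (s : S) : xmon S := [ffun t => nat_of_bool (t == s)].
Definition cplx2 (a b : S) : xmon S := [ffun t => nat_of_bool (t == a) + nat_of_bool (t == b)].

(* Component data: component c has enzyme Y c, length L c, intermediates
   U c j (1 <= j <= L c) and substrates/products Sb c j (0 <= j <= L c):
   Y+S_0 <=> U_1 -> Y+S_1 <=> ... <=> U_L -> Y+S_L. *)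
Variables (Y : C -> S) (L : C -> nat) (U : C -> nat -> S) (Sb : C -> nat -> S).

Definition compReaction (c : C) (y y' : xmon S) : Prop :=
  exists j, 0 < j <= L c /\
    [\/ (y, y') = (cplx2 (Y c) (Sb c j.-1), cplx1 (U c j)),
        (y, y') = (cplx1 (U c j), cplx2 (Y c) (Sb c j.-1)) |
        (y, y') = (cplx1 (U c j), cplx2 (Y c) (Sb c j))].

Definition intermediate (s : S) : Prop := exists c j, 0 < j <= L c /\ s = U c j.

Definition H1 (src tgt : Rx -> xmon S) : Prop :=
  (forall c, 0 < L c) /\
  (forall r, exists c, compReaction c (src r) (tgt r)) /\
  (forall c y y', compReaction c y y' -> exists r, src r = y /\ tgt r = y') /\
  (forall c c' j j', 0 < j <= L c -> 0 < j' <= L c' -> U c j = U c' j' -> c = c' /\ j = j') /\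
  (forall c c' j, 0 < j <= L c ->
     U c j <> Y c' /\ (forall j', j' <= L c' -> U c j <> Sb c' j')) /\
  (forall c j j', j <= L c -> j' <= L c ->
     Sb c j <> Y c /\ (Sb c j = Sb c j' -> j = j')) /\
  (forall c c' j j', j <= L c -> j' <= L c' ->
     cplx2 (Y c) (Sb c j) = cplx2 (Y c') (Sb c' j') -> c = c').

(* S_U for U = U c j is { Sb c i | i <= L c }. Partition given by part : S -> 'I_M.+1. *)
Definition H2 (M : nat) (part : S -> 'I_M.+1) : Prop :=
  [/\ 2 <= M,
      forall alpha : 'I_M.+1, exists s, part s = alpha,
      forall s, part s = ord0 <-> intermediate s &
      forall c j, 0 < j <= L c ->
        exists alpha : 'I_M.+1, 0 < (alpha : nat) /\
          (forall i, i <= L c -> part (Sb c i) = alpha) /\ part (Y c) <> alpha].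
End Network.

(* Main.v *)
Require Import Defs.
From HB Require Import structures.
From mathcomp Require Import all_boot all_order all_algebra.

Lemma tder_cover (S Rx : finType) (src tgt : Rx -> xmon S) (p : fpoly S Rx) t :
  t \in tder src tgt p -> exists r, forall s, src r s <= t.2 s.
Proof.
rewrite /tder => /flattenP [q /mapP [i _ ->]].
rewrite /pmul => /flattenP [q' /mapP [t1 _ ->]] /mapP [u1 Hu ->].
move: Hu; rewrite /rhs => /mapP [r _ ->].
by exists r => s /=; rewrite ffunE leq_addl.
Qed.

Theorem mainTheorem9
  (S Rx : finType) (src tgt : Rx -> xmon S)
  (* reactions are distinct pairs of distinct complexes *)
  (Hinj : injective (fun r => (src r, tgt r)))
  (Hne : forall r, src r <> tgt r)
  (* every species occurs in the network *)
  (Hocc : forall s, exists r, 0 < src r s \/ 0 < tgt r s)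
  (C : finType) (Y : C -> S) (L : C -> nat) (U : C -> nat -> S) (Sb : C -> nat -> S)
  (HH1 : H1 Y L U Sb src tgt)
  (M : nat) (part : S -> 'I_M.+1)
  (HH2 : H2 Y L U Sb part)
  (X : S) (HX : ~ intermediate L U X) :
  forall (l : nat), 1 <= l ->
  forall (Z : S), ~ intermediate L U Z ->
  forall (m : nat), 2 <= m ->
    ~ appears (iter l (tder src tgt) (xvar Rx X)) (zpow Z m).
Proof.
move=> [|l] // _ Z HZ m _ [a].
case: HH1 => _ [Hr [_ [_ [_ [HSY _]]]]].
rewrite /coef big_seq_cond big1 ?eqxx // => t /andP [Ht /andP [_ /eqP Hb]].
exfalso.
have [r Hsr] := @tder_cover S Rx src tgt _ t Ht.
rewrite Hb in Hsr.
have [c [j [Hj Hc]]] := Hr r.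
have Hz : forall s, 0 < src r s -> s = Z.
  move=> s Hs; have := leq_trans Hs (Hsr s); rewrite /zpow ffunE.
  by case: eqP.
case: Hc => [] [] Hsrc _; rewrite Hsrc in Hz.
- have HS : Sb c j.-1 <> Y c.
    have Hl : j.-1 <= L c.
      by case/andP: Hj => _ Hj; exact: leq_trans (leq_pred _) Hj.
    by case: (HSY c j.-1 j.-1 Hl Hl).
  have H1 : Y c = Z by apply: Hz; rewrite /cplx2 ffunE eqxx.
  have H2 : Sb c j.-1 = Z.
    by apply: Hz; rewrite /cplx2 ffunE eqxx addn1.
  by apply: HS; rewrite H1 H2.
- apply: HZ; exists c, j; split => //; symmetry; apply: Hz.
  by rewrite /cplx1 ffunE eqxx.
- apply: HZ; exists c, j; split => //; symmetry; apply: Hz.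
  by rewrite /cplx1 ffunE eqxx.
Qed.
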